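(* Let $P$ be a polygon with vertex set $V$ and a non-empty dissection $D$, and let $d=\{\zeta,\eta\}\in D$ be such that $D = \{d\}\cup D_2$ where $D_2$ is a dissection of the subpolygon with vertex set $V_2 = \{\varepsilon \in V : \eta \le \varepsilon \le \zeta\}$. Let $U_1 = \{\varepsilon\in V : \zeta<\varepsilon<\eta\}$ and $U_2 = \{\varepsilon\in V : \eta<\varepsilon<\zeta\}$. Let $\alpha \in U_1$, $\beta \in U_2$, and let $\pi = (\pi_1,\dots,\pi_p) \in \mathcal{T}_{P,D}(\alpha,\beta)$ with $p\ge 3$, $\pi_2 = \zeta$ and $\pi_3 \neq \eta$. Then $\eta < \pi_i \le \zeta$ (i.e. $\pi_i \in U_2\cup\{\zeta\}$) for all $i \ge 2$.
   Context: A polygon is a finite set $V$ of at least three vertices with a cyclic order, pictured as a convex polygon in the plane with vertices anticlockwise. ''$a\le\varepsilon\le b$'' means $\varepsilon$ lies on the cyclic interval from $a$ to $b$ in the positive direction, endpoints included; ''$<$'' excludes the corresponding endpoint. A subpolygon is a subset of at least three vertices with induced cyclic order. A diagonal is a two-element subset of $V$ (edges included); non-edges are internal. Diagonals cross if they consist of four distinct vertices $\alpha,\beta,\gamma,\delta$ appearing cyclically as $\alpha,\gamma,\beta,\delta$ or $\alpha,\delta,\beta,\gamma$. A dissection is a set of pairwise non-crossing internal diagonals. For vertices $\pi_1\neq\pi_p$, a $T$-path from $\pi_1$ to $\pi_p$ w.r.t. $D$ is a tuple $(\pi_1,\dots,\pi_p)$ of vertices with: (i) $\{\pi_1,\pi_2\},\dots,\{\pi_{p-1},\pi_p\}$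 pairwise different diagonals; (ii) no $\{\pi_i,\pi_{i+1}\}$ crosses a diagonal of $D$; (iii) each $\{\pi_{2j},\pi_{2j+1}\}$ lies in $D$, and these cross the segment $\{\pi_1,\pi_p\}$ at pairwise different points progressing monotonically from $\pi_1$ to $\pi_p$. $\mathcal{T}_{P,D}(\alpha,\beta)$ is the set of such paths from $\alpha$ to $\beta$. *)

(* Defs.v *)
(* Polygon with n >= 3 vertices modelled as 'I_n with the
   standard cyclic (anticlockwise) order 0,1,...,n-1,0. *)
From mathcomp Require Import all_boot.
Set Implicit Arguments. Unset Strict Implicit. Unset Printing Implicit Defensive.

Section Polygon.
Variable n : nat.
Local Notation V := 'I_n.

(* a <= e <= b : e lies on the cyclic interval from a to b (positive
   direction), endpoints included. *)
Definition cyc_le (a e b : V) : bool :=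
  (e + n - a) %% n <= (b + n - a) %% n.

Definition cyc_lt (a e b : V) : bool := [&& e != a, e != b & cyc_le a e b].
Definition cyc_lt_le (a e b : V) : bool := (e != a) && cyc_le a e b.

Definition diag (d : {set V}) : Prop := #|d| = 2.

Definition crosses (d1 d2 : {set V}) : Prop :=
  exists al be ga de : V,
    [/\ d1 = [set al; be], d2 = [set ga; de],
        uniq [:: al; be; ga; de] &
        (cyc_lt al ga be && cyc_lt be de al) ||
        (cyc_lt al de be && cyc_lt be ga al)].

Definition edge_of (W : {set V}) (d : {set V}) : Prop :=
  exists x y : V, [/\ d = [set x; y], x \in W, y \in W, x != y &
    (forall z, z \in W -> ~~ cyc_lt x z y)].

Definition internal_diag_of (W : {set V}) (d : {set V}) : Prop :=
  [/\ diag d, d \subset W & ~ edge_of W d].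

Definition dissection_of (W : {set V}) (D : {set {set V}}) : Prop :=
  (forall d, d \in D -> internal_diag_of W d) /\
  (forall d1 d2, d1 \in D -> d2 \in D -> ~ crosses d1 d2).

(* For diagonals e1, e2 (both crossing the segment {al, be}) which do not
   cross each other, the crossing point of e1 with the segment is strictly
   closer to al than that of e2: e2 lies on the be-side of e1. *)
Definition cross_before (al be : V) (e1 e2 : {set V}) : Prop :=
  exists a1 b1 a2 b2 : V,
    [/\ e1 = [set a1; b1], e2 = [set a2; b2], e1 != e2,
        [&& cyc_lt al a1 be, cyc_lt be b1 al, cyc_lt al a2 be & cyc_lt be b2 al] &
        cyc_le a1 a2 be && cyc_le be b2 b1].

(* The path pi = (pi_1, ..., pi_p) is stored as a sequence; pi_(i+1) is
   nth al pi i (0-indexed).  step i = {pi_(i+1), pi_(i+2)}. *)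
Definition step (al : V) (pi : seq V) (i : nat) : {set V} :=
  [set nth al pi i; nth al pi i.+1].

Definition Tpath (D : {set {set V}}) (al be : V) (pi : seq V) : Prop :=
  [/\ al != be, 2 <= size pi, nth al pi 0 = al & nth al pi (size pi).-1 = be] /\
  [/\
   ((forall i, i < (size pi).-1 -> nth al pi i != nth al pi i.+1) /\
   (forall i j, i < (size pi).-1 -> j < (size pi).-1 -> i != j ->
      step al pi i != step al pi j)),
   (forall i d, i < (size pi).-1 -> d \in D -> ~ crosses (step al pi i) d) &
   ((
   (* (iii) the even (1-indexed) steps, i.e. 0-indexed odd steps, lie in D,
      cross the segment {pi_1, pi_p}, at points progressing monotonically *)
   forall i, i < (size pi).-1 -> odd i ->
      step al pi i \in D /\ crosses (step al pi i) [set al; be]) /\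
   (forall i j, j < (size pi).-1 -> odd i -> odd j -> i < j ->
      cross_before al be (step al pi i) (step al pi j)))].

End Polygon.

(* Main.v *)
Require Import Defs.
From mathcomp Require Import all_boot zify.
Set Implicit Arguments. Unset Strict Implicit.

Section A.
Variable n : nat.
Lemma modE (x y : 'I_n) : (x + n - y) %% n = if y <= x then x - y else x + n - y.
Proof.
have hx := ltn_ord x; have hy := ltn_ord y.
case: leqP => h.
  have -> : x + n - y = (x - y) + n by lia.
  by rewrite modnDr modn_small //; lia.
by rewrite modn_small //; lia.
Qed.
Lemma ordeqE (x y : 'I_n) : (x == y) = (nat_of_ord x == nat_of_ord y).
Proof. by []. Qed.
End A.

Ltac cyc :=
  repeat match goal with H : is_true _ |- _ => revert H end;
  rewrite /cyc_lt_le /cyc_lt /cyc_le ?modE ?ordeqE;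
  repeat match goal with
  | x : ordinal _ |- _ => let h := fresh in have h := ltn_ord x; revert h; generalize (nat_of_ord x); clear x
  end; intros;
  repeat match goal with H : is_true _ |- _ => revert H end;
  repeat match goal with
  | |- context [if ?a <= ?b then _ else _] => case: (leqP a b)
  end; intros; lia.

Section L.
Variable n : nat.
Implicit Types (x y z e al be p a m : 'I_n).
Lemma LA z al e be : cyc_lt z al e -> cyc_lt e be z -> cyc_le al e be.
Proof. intros. cyc. Qed.
Lemma LB x m y p : cyc_le x m y -> cyc_le x p y -> cyc_le x p m || cyc_le m p y.
Proof. intros. cyc. Qed.
Lemma LC al p e z : cyc_le al p e -> cyc_le e p z -> cyc_lt z al e -> p == e.
Proof. intros. cyc. Qed.
Lemma LD x p y a : cyc_le x p y -> cyc_le p a y -> cyc_le x a y.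
Proof. intros. cyc. Qed.
Lemma LE e a be z : cyc_le e a be -> cyc_lt e be z -> cyc_le e a z.
Proof. intros. cyc. Qed.
Lemma LF e p be a : cyc_le e p be -> p != e -> cyc_le p a be -> e != be -> a != e.
Proof. intros. cyc. Qed.
Lemma LW x p y : cyc_lt x p y -> cyc_le x p y.
Proof. intros. cyc. Qed.
Lemma LG z al e be : cyc_lt z al e -> cyc_lt e be z -> ~~ cyc_lt al z be.
Proof. intros. cyc. Qed.
Lemma LH al x be : cyc_lt al x be -> cyc_lt be x al -> False.
Proof. intros. cyc. Qed.
Lemma LI e be z : cyc_lt e be z -> cyc_lt_le e z z.
Proof. intros. cyc. Qed.
Lemma LJ e be z : cyc_lt e be z -> cyc_lt_le e be z.
Proof. intros. cyc. Qed.
Lemma LK e be z b2 : cyc_lt e be z -> cyc_le be b2 z -> cyc_lt_le e b2 z.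
Proof. intros. cyc. Qed.
Lemma LN e be z : cyc_lt e be z -> e != be.
Proof. intros. cyc. Qed.
End L.

Theorem lemma3p6 (n : nat) (hn : 3 <= n) (D D2 : {set {set 'I_n}})
  (zeta eta : 'I_n) :
  dissection_of [set: 'I_n] D -> D != set0 ->
  [set zeta; eta] \in D ->
  D = [set [set zeta; eta]] :|: D2 ->
  dissection_of [set e | cyc_le eta e zeta] D2 ->
  forall (alpha beta : 'I_n) (pi : seq 'I_n),
    cyc_lt zeta alpha eta ->
    cyc_lt eta beta zeta ->
    Tpath D alpha beta pi ->
    3 <= size pi ->
    nth alpha pi 1 = zeta ->
    nth alpha pi 2 != eta ->
    forall i, 1 <= i < size pi -> cyc_lt_le eta (nth alpha pi i) zeta.
Proof.
move=> hD hD0 hd HD [hD2 _] al be pi hal hbe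
  [[hab hsz h0 hl] [[hnx hst] hcr [hodd hmono]]] hsz3 h1 h2 i /andP[hi1 hi2].
set p3 := nth al pi 2 in h2 *.
have hzp : zeta != p3.
  have := hnx 1 ltac:(lia); by rewrite h1.
have hs1 : step al pi 1 = [set zeta; p3] by rewrite /step h1.
have [hs1D _] := hodd 1 ltac:(lia) isT.
have hp3 : cyc_le eta p3 zeta.
  move: hs1D; rewrite HD hs1 in_setU in_set1 => /orP[/eqP E|H].
    have : p3 \in [set zeta; eta] by rewrite -E set22.
    case/set2P => E2.
      by rewrite E2 eqxx in hzp.
    by rewrite E2 eqxx in h2.
  have [_ sub _] := hD2 _ H.
  have := subsetP sub p3 (set22 _ _).
  by rewrite inE.
have hstep : forall j x, j < (size pi).-1 -> odd j -> x \in step al pi j ->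
    cyc_lt_le eta x zeta.
  move=> j x hj oj hx.
  case: (ltngtP j 1) => [hj1|hj1|hj1].
  - by case: j hj1 oj {hj hx}.
  - have [a1 [b1 [a2 [b2 [E1 E2 _ /and4P[h1a h1b h2a h2b] /andP[c1 c2]]]]]] :=
      hmono 1 j hj isT oj hj1.
    rewrite hs1 in E1.
    have ha1 : a1 \in [set zeta; p3] by rewrite E1 set21.
    have hb1 : b1 \in [set zeta; p3] by rewrite E1 set22.
    have a1p : a1 = p3.
      case/set2P: ha1 => // E.
      by move: (LG hal hbe); rewrite -E h1a.
    have b1z : b1 = zeta.
      case/set2P: hb1 => // E.
      by case: (LH h1a); rewrite a1p -E.
    subst a1 b1.
    move: hx; rewrite E2 => /set2P[->|->].
    + have hpe : cyc_le eta p3 be.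
        have := LB (LA hal hbe) (LW h1a).
        case/orP => // H.
        have := LC H hp3 hal.
        by rewrite (negbTE h2).
      rewrite /cyc_lt_le.
      have -> : a2 != eta by apply: (LF hpe h2 c1 (LN hbe)).
      by rewrite (LE (LD hpe c1) hbe).
    + exact: (LK hbe c2).
  - subst j. move: hx; rewrite hs1 => /set2P[->|->].
    + exact: (LI hbe).
    + by rewrite /cyc_lt_le h2 hp3.
case: (ltngtP i (size pi).-1) => [hi|hi|hi].
- case oi: (odd i).
    by apply: (hstep i) => //; rewrite /step set21.
  apply: (hstep i.-1); first by lia.
    by move: oi hi1; case: i {hi hi2} => //= i; case: (odd i).
  have -> : i = i.-1.+1 by lia.
  by rewrite /step set22.
- lia.
- rewrite hi hl. exact: (LJ hbe).
Qed.
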